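(* Let $(X,+,d)$ be a complete, locally compact Abelian metric group with translation-invariant metric $d$ such that every non-empty open ball in $X$ contains infinitely many elements. Let $A\in K(X)$. Then the spectre operator $S:K(X)\to K(X)$ is continuous at $A$ (with respect to the Pompeiu–Hausdorff metric) if and only if $S(A)=\{0\}$.
   Context: $d$ satisfies $d(x,y)=d(x+z,y+z)$ for all $x,y,z\in X$; $0$ is the neutral element. $K(X)$ is the family of non-empty compact subsets of $X$ with the Pompeiu–Hausdorff metric $d_H(A,B)=\max\{\sup_{a\in A}d(a,B),\sup_{b\in B}d(A,b)\}$. The spectre of $A\subset X$ is $S(A):=\{z\in X:\ \forall_{a\in A}\ (a+z\in A \text{ or } a-z\in A)\}$; it is compact for compact non-empty $A$. *)

(* Defs.v *)
From HB Require Import structures.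
From mathcomp Require Import all_boot all_order all_algebra.
From mathcomp Require Import all_classical all_reals.
Set Implicit Arguments. Unset Strict Implicit. Unset Printing Implicit Defensive.
Import Order.TTheory GRing.Theory Num.Theory.
Local Open Scope classical_set_scope.
Local Open Scope ring_scope.

Section MetricGroup.
Variables (R : realType) (X : zmodType) (d : X -> X -> R).

Definition is_metric : Prop :=
  [/\ forall x y, 0 <= d x y,
      forall x y, d x y = 0 <-> x = y,
      forall x y, d x y = d y x &
      forall x y z, d x z <= d x y + d y z].

Definition translation_invariant : Prop :=
  forall x y z, d x y = d (x + z) (y + z).

Definition oball (x : X) (r : R) : set X := [set y | d x y < r].

Definition d_open (U : set X) : Prop :=
  forall x, U x -> exists2 r : R, 0 < r & oball x r `<=` U.

Definition d_compact (K : set X) : Prop :=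
  forall (I : Type) (U : I -> set X),
    (forall i, d_open (U i)) -> K `<=` \bigcup_i U i ->
    exists (n : nat) (f : nat -> I), K `<=` \bigcup_(k in [set k | (k < n)%N]) U (f k).

Definition d_cauchy (u : nat -> X) : Prop :=
  forall e : R, 0 < e -> exists N, forall m n, (N <= m)%N -> (N <= n)%N -> d (u m) (u n) < e.

Definition d_converges (u : nat -> X) (l : X) : Prop :=
  forall e : R, 0 < e -> exists N, forall n, (N <= n)%N -> d (u n) l < e.

Definition d_complete : Prop :=
  forall u, d_cauchy u -> exists l, d_converges u l.

Definition d_locally_compact : Prop :=
  forall x, exists K, d_compact K /\ exists2 r : R, 0 < r & oball x r `<=` K.

Definition balls_infinite : Prop :=
  forall x (r : R), oball x r !=set0 -> ~ finite_set (oball x r).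

Definition KX (A : set X) : Prop := A !=set0 /\ d_compact A.

Definition dist_pt_set (a : X) (B : set X) : R := inf [set d a b | b in B].

Definition dH (A B : set X) : R :=
  Num.max (sup [set dist_pt_set a B | a in A])
          (sup [set dist_pt_set b A | b in B]).

Definition spectre (A : set X) : set X :=
  [set z | forall a, A a -> A (a + z) \/ A (a - z)].

Definition spectre_continuous_at (A : set X) : Prop :=
  forall e : R, 0 < e -> exists2 delta : R, 0 < delta &
    forall B, KX B -> dH A B < delta -> dH (spectre A) (spectre B) < e.

End MetricGroup.

(* Main.v *)
Require Import Defs.
From HB Require Import structures.
From mathcomp Require Import all_boot all_order all_algebra.
From mathcomp Require Import all_classical all_reals.
From mathcomp Require Import lra.
Set Implicit Arguments. Unset Strict Implicit. Unset Printing Implicit Defensive.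
Import Order.TTheory GRing.Theory Num.Theory.
Local Open Scope classical_set_scope.
Local Open Scope ring_scope.

Section G.
Variable (X : zmodType).

Lemma alg_a (u z p h : X) : u + z = h -> p = u + (p + z) - h.
Proof. by move=> <-; rewrite opprD addrACA subrr add0r addrK. Qed.
Lemma alg_b (u z p h : X) : u - z = h -> p = h + (p + z) - u.
Proof. by move=> <-; rewrite addrAC [u - z - u]addrAC subrr add0r addrCA addNr addr0. Qed.
Lemma alg_c (u z p : X) : u - z = p -> u = p + z.
Proof. by move=> <-; rewrite subrK. Qed.

Lemma spectre_sym (A : set X) z : spectre A z -> spectre A (- z).
Proof. by move=> h a /h [] ?; [right|left]; rewrite ?opprK. Qed.

Lemma spectre0 (A : set X) : spectre A 0.
Proof. by move=> a Aa; left; rewrite addr0. Qed.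

Lemma spectre_generic (G : seq X) (p q1 q2 q3 : X) :
  q1 \in G -> q2 \in G -> q3 \in G -> q1 != q2 -> q1 != q3 -> q2 != q3 ->
  (forall x y w, x \in G -> y \in G -> w \in G -> p != x + y - w) ->
  spectre [set x | x \in p :: G] = [set 0].
Proof.
move=> h1 h2 h3 n12 n13 n23 hgen.
have key z : spectre [set x | x \in p :: G] z -> p + z \in G -> False.
  move=> hz hg.
  have step w : w \in G -> w != p + z -> w + z = p.
    move=> wG wg; case: (hz w); first by rewrite /= in_cons wG orbT.
      rewrite /= in_cons => /orP [/eqP //|hw].
      by move: (hgen _ _ _ wG hg hw); rewrite -(alg_a p (erefl (w + z))) eqxx.
    rewrite /= in_cons => /orP [/eqP hw|hw].
      by move: wg; rewrite (alg_c hw) eqxx.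
    by move: (hgen _ _ _ hw hg wG); rewrite -(alg_b p (erefl (w - z))) eqxx.
  have [u [v [uG [vG [ug [vg uv]]]]]] : exists u v, [/\ u \in G, v \in G, u != p + z, v != p + z & u != v].
    case: (eqVneq q1 (p + z)) => e1.
      by exists q2, q3; rewrite -e1 eq_sym n12 eq_sym n13.
    case: (eqVneq q2 (p + z)) => e2.
      by exists q1, q3; rewrite -e2 n12 eq_sym n23.
    by exists q1, q2.
  by move: uv; rewrite (addIr (z) (etrans (step u uG ug) (esym (step v vG vg)))) eqxx.
apply/seteqP; split => z /=; last by move=> ->; apply: spectre0.
move=> hz; case: (hz p); first by rewrite /= mem_head.
  rewrite /= in_cons => /orP [/eqP e|hg].
    by apply: (addrI p); rewrite addr0.
  by case: (key _ hz hg).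
rewrite /= in_cons => /orP [/eqP e|hg].
  by apply/eqP; rewrite -oppr_eq0; apply/eqP/(addrI p); rewrite addr0.
by case: (key _ (spectre_sym hz) hg).
Qed.
End G.
Section H.
Variables (R : realType) (X : zmodType) (d : X -> X -> R).
Hypothesis hmet : is_metric d.
Hypothesis hinv : translation_invariant d.

Lemma d_ge0 x y : 0 <= d x y. Proof. by case: hmet. Qed.
Lemma d_xx x : d x x = 0. Proof. by case: hmet => _ h _ _; apply/(proj2 (h x x)). Qed.
Lemma d_eq0 x y : d x y = 0 -> x = y. Proof. by case: hmet => _ h _ _; apply/(proj1 (h x y)). Qed.
Lemma d_sym x y : d x y = d y x. Proof. by case: hmet. Qed.
Lemma d_tri x y z : d x z <= d x y + d y z. Proof. by case: hmet. Qed.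

Lemma d_addr x y z : d (x + z) (y + z) = d x y. Proof. by rewrite -hinv. Qed.
Lemma d_addl x y z : d (z + x) (z + y) = d x y. Proof. by rewrite ![z + _]addrC d_addr. Qed.
Lemma d_opp x y : d (- x) (- y) = d x y.
Proof. by rewrite (hinv _ _ (x + y)) addKr [x + y]addrC addKr d_sym. Qed.

Lemma d_add_le a b z z' : d (a + z) (b + z') <= d a b + d z z'.
Proof.
apply: le_trans (d_tri _ (b + z) _) _.
by rewrite d_addr d_addl.
Qed.

Lemma d_sub_le a b z z' : d (a - z) (b - z') <= d a b + d z z'.
Proof. by rewrite -(d_opp z z'); apply: d_add_le. Qed.

Lemma oball_open x r : d_open d (oball d x r).
Proof.
move=> y; rewrite /oball /= => hy; exists (r - d x y); first by rewrite subr_gt0.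
move=> w /= hw; apply: le_lt_trans (d_tri x y w) _; lra.
Qed.

Lemma compact_incr K (U : nat -> set X) : d_compact d K ->
  (forall n, d_open d (U n)) -> (forall m n, (m <= n)%N -> U m `<=` U n) ->
  K `<=` \bigcup_n U n -> exists N, K `<=` U N.
Proof.
move=> hK hU hinc hcov; have [n [f hf]] := hK _ _ hU hcov.
exists (\sum_(k < n) f k)%N => x /hf [k /= kn] hx.
apply: hinc hx.
rewrite (bigD1 (Ordinal kn)) //=; exact: leq_addr.
Qed.

Lemma compact_bounded K x0 : d_compact d K -> exists M : R, forall y, K y -> d x0 y < M.
Proof.
move=> hK; have [|||N hN] := @compact_incr K (fun n => oball d x0 n%:R) hK.
- by move=> n; apply: oball_open.
- by move=> m n mn y /=; rewrite /oball /= => h; apply: lt_le_trans h _; rewrite ler_nat.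
- move=> y _; exists (Num.trunc (d x0 y)).+1 => //=.
  by rewrite /oball /=; rewrite truncnS_gt.
by exists N%:R.
Qed.

Lemma compact_closed K x : d_compact d K -> ~ K x -> exists2 r : R, 0 < r & forall y, K y -> r <= d x y.
Proof.
move=> hK hx.
have [|||N hN] := @compact_incr K (fun n => [set y | n.+1%:R^-1 < d x y]) hK.
- move=> n y /= hy; exists (d x y - n.+1%:R^-1); first by rewrite subr_gt0.
  move=> w; rewrite /oball /= => hw.
  have := d_tri x w y; rewrite (d_sym w y); set c := n.+1%:R^-1 in hy hw *; lra.
- move=> m n mn y /=; apply: le_lt_trans.
  by rewrite lef_pV2 ?posrE // ler_nat.
- move=> y Ky; have hxy : 0 < d x y.
    rewrite lt_def d_ge0 andbT; apply/eqP => /d_eq0 e; by apply: hx; rewrite e.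
  exists (Num.trunc ((d x y)^-1)) => //=.
  by rewrite invf_plt ?posrE // truncnS_gt.
exists N.+1%:R^-1; first by rewrite invr_gt0. 
by move=> y /hN /ltW.
Qed.

Lemma dist_le a B b : B b -> dist_pt_set d a B <= d a b.
Proof.
move=> Bb; apply: ge_inf; last by exists b.
by exists 0 => _ [c _ <-]; apply: d_ge0.
Qed.

Lemma dist_lt a B r : B !=set0 -> dist_pt_set d a B < r -> exists2 b, B b & d a b < r.
Proof.
move=> [b Bb] /inf_lt [|y [c Bc <-] h]; first by exists (d a b), b.
by exists c.
Qed.

Lemma dH_le A B c : A !=set0 -> B !=set0 ->
  (forall a, A a -> dist_pt_set d a B <= c) ->
  (forall b, B b -> dist_pt_set d b A <= c) -> dH d A B <= c.
Proof.
move=> [a Aa] [b Bb] hA hB; rewrite /dH ge_max; apply/andP; split.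
  by apply: ge_sup; [exists (dist_pt_set d a B), a | move=> _ [x Ax <-]; apply: hA].
by apply: ge_sup; [exists (dist_pt_set d b A), b | move=> _ [x Ax <-]; apply: hB].
Qed.

Lemma dH_ge1 A B a M : (forall a, A a -> dist_pt_set d a B <= M) -> A a ->
  dist_pt_set d a B <= dH d A B.
Proof.
move=> hM Aa; rewrite /dH le_max; apply/orP; left.
apply: ub_le_sup; last by exists a.
by exists M => _ [x Ax <-]; apply: hM.
Qed.

Lemma dH_ge2 A B b M : (forall b, B b -> dist_pt_set d b A <= M) -> B b ->
  dist_pt_set d b A <= dH d A B.
Proof.
move=> hM Bb; rewrite /dH le_max; apply/orP; right.
apply: ub_le_sup; last by exists b.
by exists M => _ [x Ax <-]; apply: hM.
Qed.

Lemma dist_bound A B a0 b0 M : B b0 -> (forall a, A a -> d a0 a < M) ->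
  forall a, A a -> dist_pt_set d a B <= M + d a0 b0.
Proof.
move=> Bb0 hM a Aa; apply: le_trans (dist_le a Bb0) _.
apply: le_trans (d_tri a a0 b0) _; rewrite d_sym lerD2r; exact/ltW/hM.
Qed.

Lemma seq_cover (I : Type) (U : I -> set X) (i0 : I) (s : seq X) :
  (forall x, x \in s -> exists i, U i x) ->
  exists f : nat -> I, forall x, x \in s -> exists2 k, (k < size s)%N & U (f k) x.
Proof.
elim: s => [|x s IH] hc; first by exists (fun _ => i0).
have [i hi] := hc x (mem_head _ _).
have [f hf] : exists f : nat -> I, forall x, x \in s -> exists2 k, (k < size s)%N & U (f k) x.
  by apply: IH => y hy; apply: hc; rewrite in_cons hy orbT.
exists (fun k => if k is k'.+1 then f k' else i) => y; rewrite in_cons => /orP [/eqP ->|hy].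
  by exists 0%N.
by have [k ks hk] := hf y hy; exists k.+1.
Qed.

Lemma seq_compact (s : seq X) : s != [::] -> d_compact d [set x | x \in s].
Proof.
case: s => [//|x0 s] _ I U hU hcov.
have [i0 _] := hcov x0 (mem_head _ _).
have [f hf] := @seq_cover I U i0 (x0 :: s) (fun x hx => let: ex_intro2 i _ h := hcov x hx in ex_intro _ i h).
by exists (size (x0 :: s)), f => x /hf [k ks hk]; exists k.
Qed.

Lemma compact_net K r : d_compact d K -> 0 < r -> exists s : seq X,
  (forall x, x \in s -> K x) /\ (forall y, K y -> exists2 x, x \in s & d x y < r).
Proof.
move=> hK r0.
have [|n [f hf]] := hK {x : X | K x} (fun i => oball d (sval i) r) (fun i => @oball_open (sval i) r).
  by move=> y Ky; exists (exist _ y Ky) => //=; rewrite /oball /= d_xx.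
exists [seq sval (f k) | k <- iota 0 n]; split.
  by move=> x /mapP [k _ ->]; exact: (svalP (f k)).
move=> y /hf [k /= kn hk]; exists (sval (f k)) => //.
by apply/mapP; exists k; rewrite // mem_iota.
Qed.

Lemma infinite_avoid (S : set X) (s : seq X) : ~ finite_set S -> exists2 x, S x & x \notin s.
Proof.
move=> hS; case: (pselect (exists2 x, S x & x \notin s)) => // h; exfalso; apply: hS.
apply: (sub_finite_set _ (finite_seq s)) => x Sx /=; apply/negPn/negP => hx; apply: h; by exists x.
Qed.

Lemma min_pos (g : nat -> R) n : (forall k, 0 < g k) ->
  exists2 e, 0 < e & forall k, (k < n)%N -> e <= g k.
Proof.
move=> hg; elim: n => [|n [e e0 he]]; first by exists 1.
exists (Num.min e (g n)); first by rewrite lt_min e0 hg.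
move=> k; rewrite ltnS leq_eqVlt => /orP [/eqP ->|kn]; first by rewrite ge_min lexx orbT.
by rewrite ge_min he.
Qed.
End H.

Section Fwd.
Variables (R : realType) (X : zmodType) (d : X -> X -> R).
Hypothesis hmet : is_metric d.
Hypothesis hinv : translation_invariant d.
Hypothesis hinf : balls_infinite d.
Variable A : set X.
Hypothesis hA : KX d A.

Lemma forward : spectre_continuous_at d A -> spectre A = [set 0].
Proof.
move=> hcont; have [[a0 Aa0] cA] := hA.
apply/seteqP; split; last by move=> _ ->; apply: spectre0.
move=> z0 hz0 /=; case: (pselect (z0 = 0)) => // hne; exfalso.
have e0 : 0 < d z0 0.
  by rewrite lt_def d_ge0 // andbT; apply/eqP => /(d_eq0 hmet).
have [de de0 hde] := hcont _ e0.
have de2 : 0 < de / 2 by rewrite divr_gt0.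
have [s [sA snet]] := compact_net hmet cA de2.
have binf : ~ finite_set (oball d a0 (de / 2)).
  by apply: hinf; exists a0; rewrite /oball /= d_xx.
have [q1 q1b _] := infinite_avoid [::] binf.
have [q2 q2b] := infinite_avoid [:: q1] binf; rewrite mem_seq1 => n12.
have [q3 q3b] := infinite_avoid [:: q1; q2] binf; rewrite !in_cons in_nil orbF negb_or => /andP [n13 n23].
set G := q1 :: q2 :: q3 :: s.
set bad := [seq x + yw.1 - yw.2 | x <- G, yw <- [seq (y, w) | y <- G, w <- G]].
have [p pb pbad] := infinite_avoid bad binf.
have hSF : spectre [set x | x \in p :: G] = [set 0].
  apply: (@spectre_generic _ G p q1 q2 q3); rewrite ?in_cons ?eqxx ?orbT // 1?eq_sym //.
  move=> x y w xG yG wG; apply/eqP => e; move: pbad; rewrite e.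
  have : (y, w) \in [seq (y, w) | y <- G, w <- G] by apply: allpairs_f.
  by move=> /(allpairs_f (fun x yw => x + yw.1 - yw.2) xG) ->.
have KF : KX d [set x | x \in p :: G].
  by split; [exists p; rewrite /= mem_head | apply: seq_compact].
have hdH : dH d A [set x | x \in p :: G] < de.
  apply: le_lt_trans (_ : de / 2 < de); last by rewrite ltr_pdivrMr // ltr_pMr // ltr1n.
  apply: dH_le; first by exists a0.
  - by exists p; rewrite /= mem_head.
  - move=> a Aa; have [x xs hx] := snet a Aa.
    apply: le_trans (dist_le hmet _ (_ : [set x | x \in p :: G] x)) _.
      by rewrite /= !in_cons xs !orbT.
    by rewrite d_sym //; apply: ltW.
  - move=> f; rewrite /= !in_cons => hf.
    case: (boolP (f \in s)) => fs.
      by apply: le_trans (dist_le hmet _ (sA _ fs)) _; rewrite d_xx // ltW.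
    apply: le_trans (dist_le hmet _ Aa0) _; rewrite d_sym //; apply: ltW.
    by move: hf; rewrite (negbTE fs) !orbF => /or4P [] /eqP ->.
have := hde _ KF hdH; rewrite hSF.
have [MA hMA] := compact_bounded hmet a0 cA.
have hM : forall z, spectre A z -> dist_pt_set d z [set 0] <= MA.
  move=> z hz; apply: le_trans (dist_le hmet _ (erefl : [set (0 : X)] 0)) _.
  case: (hz a0 Aa0) => h.
    by rewrite -(d_addl hinv _ _ a0) addr0 d_sym //; apply/ltW/hMA.
  by rewrite -(d_opp hmet hinv) oppr0 -(d_addl hinv _ _ a0) addr0 d_sym //; apply/ltW/hMA.
have := dH_ge1 hM hz0.
rewrite /dist_pt_set image_set1 inf1 => h1 h2.
by have := le_lt_trans h1 h2; rewrite ltxx.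
Qed.
End Fwd.

Section Bwd.
Variables (R : realType) (X : zmodType) (d : X -> X -> R).
Hypothesis hmet : is_metric d.
Hypothesis hinv : translation_invariant d.
Variable A : set X.
Hypothesis hA : KX d A.

Definition GoodZ (e4 : R) (z : X) (rho : R) :=
  (d z 0 < e4 /\ rho <= e4) \/
  exists a r, [/\ A a, 0 < r, rho <= r / 2 &
     forall x, A x -> r <= d (a + z) x /\ r <= d (a - z) x].

Lemma goodM e4 z r1 r2 : GoodZ e4 z r1 -> r2 <= r1 -> GoodZ e4 z r2.
Proof.
move=> [[h1 h2]|[a [r [Aa r0 hr hx]]]] h.
  by left; split => //; apply: le_trans h h2.
by right; exists a, r; split => //; apply: le_trans h hr.
Qed.

Lemma goodP e4 z : 0 < e4 -> spectre A = [set 0] -> exists2 rho, 0 < rho & GoodZ e4 z rho.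
Proof.
move=> e40 hS; case: (ltP (d z 0) e4) => h.
  by exists e4 => //; left.
have zn : z <> 0 by move=> ez; move: h; rewrite ez d_xx // leNgt e40.
case: (pselect (exists a, A a /\ ~ A (a + z) /\ ~ A (a - z))) => [[a [Aa [h1 h2]]] | hn].
  have [r1 r10 hr1] := compact_closed hmet hA.2 h1.
  have [r2 r20 hr2] := compact_closed hmet hA.2 h2.
  exists (Num.min r1 r2 / 2); first by rewrite divr_gt0 // lt_min r10 r20.
  right; exists a, (Num.min r1 r2); split => //; first by rewrite lt_min r10 r20.
  move=> x Ax; split.
    by apply: le_trans (hr1 _ Ax); rewrite ge_min lexx.
  by apply: le_trans (hr2 _ Ax); rewrite ge_min lexx orbT.
exfalso; have : spectre A z.
  move=> a Aa; case: (pselect (A (a + z))) => h1; first by left.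
  case: (pselect (A (a - z))) => h2; first by right.
  by exfalso; apply: hn; exists a.
by rewrite hS.
Qed.

Lemma backward : spectre A = [set 0] -> spectre_continuous_at d A.
Proof.
move=> hS e e0; have [[a0 Aa0] cA] := hA.
have e40 : 0 < e / 4 by rewrite divr_gt0.
pose I := {yr : X * R | [/\ A yr.1, 0 < yr.2, GoodZ (e / 4) (yr.1 - a0) yr.2 & GoodZ (e / 4) (a0 - yr.1) yr.2]}.
have [|n [f hf]] := cA I (fun i => oball d (sval i).1 ((sval i).2 / 2)) (fun i => @oball_open _ _ _ hmet _ _).
  move=> y Ay.
  have [r1 r10 g1] := goodP (y - a0) e40 hS.
  have [r2 r20 g2] := goodP (a0 - y) e40 hS.
  have hr : 0 < Num.min r1 r2 by rewrite lt_min r10 r20.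
  have m1 : Num.min r1 r2 <= r1 by rewrite ge_min lexx.
  have m2 : Num.min r1 r2 <= r2 by rewrite ge_min lexx orbT.
  exists (exist _ (y, Num.min r1 r2) (And4 Ay hr (goodM g1 m1) (goodM g2 m2))) => //=.
  by rewrite /oball /= d_xx // divr_gt0.
have [de de0 hde] := @min_pos _ (fun k => (sval (f k)).2 / 4) n
  (fun k => let: And4 _ h _ _ := svalP (f k) in divr_gt0 h (ltr0Sn _ 3)).
exists de => // B [[b0 Bb0] cB] hdH.
have [MA hMA] := compact_bounded hmet a0 cA.
have [MB hMB] := compact_bounded hmet b0 cB.
have hAB a : A a -> exists2 b, B b & d a b < de.
  move=> Aa; apply: dist_lt; first by exists b0.
  apply: le_lt_trans hdH; exact: dH_ge1 (dist_bound hmet Bb0 hMA) Aa.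
have hBA b : B b -> exists2 a, A a & d b a < de.
  move=> Bb; apply: dist_lt; first by exists a0.
  apply: le_lt_trans hdH; exact: dH_ge2 (dist_bound hmet Aa0 hMB) Bb.
rewrite hS; apply: le_lt_trans (_ : e / 2 < e); last by rewrite ltr_pdivrMr // ltr_pMr // ltr1n.
apply: dH_le; first by exists 0.
- by exists 0; apply: spectre0.
- move=> a /= ->; apply: le_trans (dist_le hmet _ (@spectre0 _ B)) _.
  by rewrite d_xx // divr_ge0 // ltW.
move=> z hz; apply: le_trans (dist_le hmet _ (erefl : [set (0 : X)] 0)) _.
have [b1 Bb1 hb1] := hAB a0 Aa0.
have [zs [rho [rho0 hdr hzs gz]]] : exists zs rho,
    [/\ 0 < rho, de <= rho / 4, d z zs < rho & GoodZ (e / 4) zs rho].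
  case: (hz b1 Bb1) => hb.
  - have [a' Aa' ha'] := hBA _ hb.
    have [k /= kn] := hf a' Aa'.
    have := hde k kn; case: (f k) => [[y rho] [/= Ay rho0 g1 g2]] /= hdk hk.
    exists (y - a0), rho; split => //.
    rewrite -(d_addr hinv _ _ a0) subrK.
    have t1 := d_tri hmet (z + a0) (b1 + z) y.
    have t2 := d_tri hmet (b1 + z) a' y.
    have t3 : d (z + a0) (b1 + z) = d a0 b1 by rewrite addrC d_addr.
    rewrite /oball /= d_sym // in hk.
    lra.
  - have [a' Aa' ha'] := hBA _ hb.
    have [k /= kn] := hf a' Aa'.
    have := hde k kn; case: (f k) => [[y rho] [/= Ay rho0 g1 g2]] /= hdk hk.
    exists (a0 - y), rho; split => //.
    rewrite -(d_addr hinv _ _ (y - z)) [z + _]addrC subrK addrA subrK.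
    have t1 := d_tri hmet y a' (a0 - z).
    have t2 := d_tri hmet a' (b1 - z) (a0 - z).
    have t3 : d (b1 - z) (a0 - z) = d a0 b1 by rewrite d_addr // d_sym.
    rewrite /oball /= in hk; rewrite (d_sym hmet a' (b1 - z)) in t2.
    lra.
case: gz => [[h1 h2]|[a [r [Aa r0 hr hfar]]]].
  have := d_tri hmet z zs 0; lra.
exfalso; have [b Bb hab] := hAB a Aa.
case: (hz b Bb) => hb.
- have [a'' Aa'' h''] := hBA _ hb.
  have [hf1 _] := hfar a'' Aa''.
  have t1 := d_tri hmet (a + zs) (b + z) a''.
  have t2 := d_add_le hmet hinv a b zs z.
  have t3 := d_sym hmet zs z; clear -t1 t2 t3 hf1 h'' hab hzs hdr hr r0; lra.
- have [a'' Aa'' h''] := hBA _ hb.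
  have [_ hf2] := hfar a'' Aa''.
  have t1 := d_tri hmet (a - zs) (b - z) a''.
  have t2 := d_sub_le hmet hinv a b zs z.
  have t3 := d_sym hmet zs z; clear -t1 t2 t3 hf2 h'' hab hzs hdr hr r0; lra.
Qed.
End Bwd.

Theorem theorem3p10 (R : realType) (X : zmodType) (d : X -> X -> R)
  (hmet : is_metric d) (hinv : translation_invariant d)
  (hcompl : d_complete d) (hlc : d_locally_compact d)
  (hinf : balls_infinite d)
  (A : set X) (hA : KX d A) :
  spectre_continuous_at d A <-> spectre A = [set 0].
Proof.
split; first exact: (forward hmet hinv hinf hA).
exact: (backward hmet hinv hA).
Qed.
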